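(* Let $k$ be a perfect field of characteristic $p>0$, $R=k[x_1,\ldots,x_n]$, and let $A=R/(f_1,\ldots,f_m)$. Let $\widetilde f_1,\ldots,\widetilde f_m\in\widetilde R=W_2(k)[x_1,\ldots,x_n]$ be lifts of $f_1,\ldots,f_m$ such that $B=\widetilde R/(\widetilde f_1,\ldots,\widetilde f_m)$ is flat over $W_2(k)$ (so $B$ is a $W_2(k)$-lifting of $A$). Then there exists a ring endomorphism of $B$ lying over the Frobenius $\sigma$ of $W_2(k)$ and reducing to the $p$-th power map of $A$ if and only if there exist $h_1,\ldots,h_n\in R$ such that for every $i\in\{1,\ldots,m\}$ $$P(\widetilde f_i)\equiv\sum_{k=1}^n\Big(\frac{\partial f_i}{\partial x_k}\Big)^ph_k\pmod{(f_1,\ldots,f_m)}.$$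
   Context: $W_2(k)$ is the ring of length-$2$ Witt vectors with Frobenius $\sigma(a_0,a_1)=(a_0^p,a_1^p)$. Let $\widetilde F:\widetilde R\to\widetilde R$ be $\sum_Ia_Ix^I\mapsto\sum_I\sigma(a_I)x^{pI}$ (multi-index notation). For $\widetilde f\in\widetilde R$ the element $\widetilde F(\widetilde f)-\widetilde f^p$ lies in $p\widetilde R$, and since multiplication by $p$ induces an isomorphism $R=\widetilde R/p\widetilde R\cong p\widetilde R$, there is a unique $P(\widetilde f)\in R$ with $pP(\widetilde f)=\widetilde F(\widetilde f)-\widetilde f^p$. *)

(* Defs.v *)
From HB Require Import structures.
From mathcomp Require Import all_boot all_order all_algebra.
From mathcomp Require Import mpoly.
From Stdlib Require Import ClassicalEpsilon.

Set Implicit Arguments. Unset Strict Implicit. Unset Printing Implicit Defensive.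
Import GRing.Theory.
Local Open Scope ring_scope.

Definition in_ideal (T : comNzRingType) (m : nat) (g : 'I_m -> T) (x : T) : Prop :=
  exists c : 'I_m -> T, x = \sum_(j < m) c j * g j.

(* A (commutative) ring W playing the role of W_2(k): a W_2(k)-type ring,
   i.e. a ring W with a surjective ring map pi : W -> k such that
   ker pi = p W and multiplication by p induces an iso k = W/pW ~ pW
   (i.e. ker (p * _) = ker pi).  For k perfect of char p such a W is
   (uniquely) isomorphic to W_2(k), with pi the projection (a0,a1) |-> a0. *)
Definition is_W2 (k : fieldType) (p : nat) (W : comNzRingType)
  (pi : {rmorphism W -> k}) : Prop :=
  [/\ forall a : k, exists w : W, pi w = a,
      forall w : W, pi w = 0 <-> exists v : W, w = p%:R * v
    & forall w : W, p%:R * w = 0 <-> pi w = 0].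

Definition Ftilde (W : comNzRingType) (n p : nat) (sigma : W -> W)
  (g : {mpoly W[n]}) : {mpoly W[n]} :=
  mmap (fun c => (sigma c)%:MP) (fun i => 'X_i ^+ p) g.

(* P(g) is the unique element of R = k[x] with p * (lift of P(g)) = F(g) - g^p. *)
Definition isP (k : fieldType) (W : comNzRingType) (n p : nat)
  (pi : {rmorphism W -> k}) (sigma : W -> W) (g : {mpoly W[n]}) (h : {mpoly k[n]}) : Prop :=
  exists ht : {mpoly W[n]}, map_mpoly pi ht = h /\
    p%:R * ht = Ftilde p sigma g - g ^+ p.

Definition Pmap (k : fieldType) (W : comNzRingType) (n p : nat)
  (pi : {rmorphism W -> k}) (sigma : W -> W) (g : {mpoly W[n]}) : {mpoly k[n]} :=
  epsilon (inhabits 0) (isP p pi sigma g).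

(* Flatness of B = W[x]/(g_1..g_m) over W, via the equational criterion of
   flatness (Stacks 00HK): every relation sum_i a_i b_i = 0 in B (a_i in W,
   b_i in B) is trivial. Elements of B are represented by elements of W[x]. *)
Definition flat_quot (W : comNzRingType) (n m : nat) (g : 'I_m -> {mpoly W[n]}) : Prop :=
  forall (l : nat) (a : 'I_l -> W) (x : 'I_l -> {mpoly W[n]}),
    in_ideal g (\sum_(i < l) a i *: x i) ->
    exists (q : nat) (y : 'I_q -> {mpoly W[n]}) (b : 'I_l -> 'I_q -> W),
      (forall i, in_ideal g (x i - \sum_(j < q) b i j *: y j)) /\
      (forall j, \sum_(i < l) a i * b i j = 0).

(* Ring endomorphisms of B = W[x]/J (J = (g)), represented by ring
   endomorphisms Phi of W[x] with Phi(J) <= J, lying over sigma (on constants,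
   modulo J) and reducing modulo p to the p-th power map of
   A = B/pB = k[x]/(g mod p). *)
Definition frob_lift_endo (W : comNzRingType) (n m p : nat) (sigma : W -> W)
  (g : 'I_m -> {mpoly W[n]}) (Phi : {rmorphism {mpoly W[n]} -> {mpoly W[n]}}) : Prop :=
  [/\ forall b, in_ideal g b -> in_ideal g (Phi b),
      forall c : W, in_ideal g (Phi c%:MP - (sigma c)%:MP)
    & forall b, exists u, in_ideal g (Phi b - b ^+ p - p%:R * u)].

(* Main.v *)
Require Import Defs.
From HB Require Import structures.
From mathcomp Require Import all_boot all_order all_algebra.
From mathcomp Require Import mpoly.
From Stdlib Require Import ClassicalEpsilon.
Set Implicit Arguments. Unset Strict Implicit. Unset Printing Implicit Defensive.
Import GRing.Theory.
From mathcomp Require Import ring.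
Local Open Scope ring_scope.

Lemma mpoly_ring_ind (R : comNzRingType) n (P : {mpoly R[n]} -> Prop) :
  (forall c, P c%:MP) -> (forall i, P 'X_i) ->
  (forall a b, P a -> P b -> P (a + b)) -> (forall a b, P a -> P b -> P (a * b)) ->
  forall g, P g.
Proof.
move=> hC hX hD hM g; rewrite (mpolyE g).
have P1 : P 1 by rewrite -mpolyC1.
elim: (msupp g) => [|m s IH]; rewrite ?big_nil ?big_cons.
  by rewrite -mpolyC0.
apply: (hD) => //; rewrite -mul_mpolyC; apply: (hM) => //.
rewrite mpolyXE_id; apply: (big_rec P) => // i x _ Px; apply: (hM) => //.
elim: (m i) => [|e IHe]; first by rewrite expr0.
by rewrite exprS; apply: (hM).
Qed.


Lemma in_ideal0 (T : comNzRingType) m (g : 'I_m -> T) : in_ideal g 0.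
Proof. by exists (fun _ => 0); rewrite big1 // => j _; rewrite mul0r. Qed.

Lemma in_idealD (T : comNzRingType) m (g : 'I_m -> T) x y :
  in_ideal g x -> in_ideal g y -> in_ideal g (x + y).
Proof.
move=> [c ->] [d ->]; exists (fun j => c j + d j).
by rewrite -big_split; apply: eq_bigr => j _; rewrite mulrDl.
Qed.

Lemma in_idealMl (T : comNzRingType) m (g : 'I_m -> T) a x :
  in_ideal g x -> in_ideal g (a * x).
Proof.
move=> [c ->]; exists (fun j => a * c j).
by rewrite mulr_sumr; apply: eq_bigr => j _; rewrite mulrA.
Qed.

Lemma in_idealMr (T : comNzRingType) m (g : 'I_m -> T) a x :
  in_ideal g x -> in_ideal g (x * a).
Proof. by rewrite mulrC; apply: in_idealMl. Qed.

Lemma in_idealN (T : comNzRingType) m (g : 'I_m -> T) x :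
  in_ideal g x -> in_ideal g (- x).
Proof. by move=> h; rewrite -mulN1r; apply: in_idealMl. Qed.

Lemma in_idealB (T : comNzRingType) m (g : 'I_m -> T) x y :
  in_ideal g x -> in_ideal g y -> in_ideal g (x - y).
Proof. by move=> hx hy; apply: in_idealD => //; apply: in_idealN. Qed.

Lemma in_ideal_gen (T : comNzRingType) m (g : 'I_m -> T) j :
  in_ideal g (g j).
Proof.
exists (fun i => (i == j)%:R); rewrite (bigD1 j) //= eqxx mul1r big1 ?addr0 //.
by move=> i /negbTE ->; rewrite mul0r.
Qed.

Lemma in_ideal_sum (T : comNzRingType) m (g : 'I_m -> T) l (F : 'I_l -> T) :
  (forall i, in_ideal g (F i)) -> in_ideal g (\sum_(i < l) F i).
Proof.
move=> h; apply: (big_rec (in_ideal g)); first exact: in_ideal0.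
by move=> i x _ hx; apply: in_idealD.
Qed.

Lemma in_ideal_eq (T : comNzRingType) m (g : 'I_m -> T) x y :
  x = y -> in_ideal g x -> in_ideal g y.
Proof. by move=> ->. Qed.

Lemma in_ideal_map (R S : comNzRingType) (phi : {rmorphism R -> S}) m (g : 'I_m -> R) x :
  in_ideal g x -> in_ideal (fun j => phi (g j)) (phi x).
Proof.
move=> [c ->]; exists (fun j => phi (c j)).
by rewrite rmorph_sum; apply: eq_bigr => j _; rewrite rmorphM.
Qed.

Definition Gm (W : comNzRingType) n p (sigma : {rmorphism W -> W})
   (u : 'I_n -> {mpoly W[n]}) : {mpoly W[n]} -> {mpoly W[n]} :=
  mmap (@mpolyC n W \o sigma) (fun i => 'X_i ^+ p + p%:R * u i).


Lemma GmC (W : comNzRingType) n p (sigma : {rmorphism W -> W}) (u : 'I_n -> {mpoly W[n]}) c :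
  Gm p sigma u c%:MP = (sigma c)%:MP.
Proof. by rewrite /Gm mmapC. Qed.

Lemma GmX (W : comNzRingType) n p (sigma : {rmorphism W -> W}) (u : 'I_n -> {mpoly W[n]}) i :
  Gm p sigma u 'X_i = 'X_i ^+ p + p%:R * u i.
Proof. by rewrite /Gm mmapX mmap1U. Qed.

Lemma Ftilde_Gm (W : comNzRingType) n p (sigma : {rmorphism W -> W}) g :
  Ftilde p sigma g = Gm p sigma (fun _ : 'I_n => 0) g.
Proof.
rewrite /Ftilde /Gm /mmap; apply: eq_bigr => m _; congr (_ * _).
by apply: mmap1_eq => i /=; rewrite mulr0 addr0.
Qed.

Lemma mderivXi (R : comNzRingType) n (i k : 'I_n) :
  ('X_i : {mpoly R[n]})^`M(k) = (i == k)%:R.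
Proof.
rewrite mderivX mnm1E; case: eqP => [->|_]; last by rewrite scale0r.
have -> : (U_(k) - U_(k) = 0)%MM by apply/mnmP => j; rewrite mnmBE subnn mnmE.
by rewrite scale1r mpolyX0.
Qed.

Lemma GmD (W : comNzRingType) n p (sigma : {rmorphism W -> W}) (u : 'I_n -> {mpoly W[n]}) a b :
  Gm p sigma u (a + b) = Gm p sigma u a + Gm p sigma u b.
Proof. exact: (rmorphD (Gm p sigma u : {rmorphism _ -> _})). Qed.

Lemma GmM (W : comNzRingType) n p (sigma : {rmorphism W -> W}) (u : 'I_n -> {mpoly W[n]}) a b :
  Gm p sigma u (a * b) = Gm p sigma u a * Gm p sigma u b.
Proof. exact: (rmorphM (Gm p sigma u : {rmorphism _ -> _})). Qed.

Lemma GmSum (W : comNzRingType) n p (sigma : {rmorphism W -> W}) (u : 'I_n -> {mpoly W[n]}) l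
  (F : 'I_l -> {mpoly W[n]}) :
  Gm p sigma u (\sum_(i < l) F i) = \sum_(i < l) Gm p sigma u (F i).
Proof. exact: (rmorph_sum (Gm p sigma u : {rmorphism _ -> _})). Qed.

Lemma pchar_mpoly (k : fieldType) p n : p \in [pchar k] -> p \in [pchar {mpoly k[n]}].
Proof. by move=> h; apply: (rmorph_pchar (@mpolyC n k)). Qed.

Lemma expDp (R : comNzRingType) p (a b : R) : p \in [pchar R] ->
  (a + b) ^+ p = a ^+ p + b ^+ p.
Proof. by move=> h; exact: (pFrobenius_autD_comm h (mulrC a b)). Qed.

Lemma map_Gm (k : fieldType) p (p_char : p \in [pchar k]) (W : comNzRingType)
  (pi : {rmorphism W -> k}) (sigma : {rmorphism W -> W})
  (sigma_frob : forall w, pi (sigma w) = pi w ^+ p) n (u : 'I_n -> {mpoly W[n]}) g :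
  map_mpoly pi (Gm p sigma u g) = (map_mpoly pi g) ^+ p.
Proof.
have cK := pchar_mpoly n p_char.
elim/mpoly_ring_ind: g.
- move=> c; rewrite GmC !map_mpolyC -rmorphXn; congr (_ %:MP); exact: sigma_frob.
- move=> i; rewrite GmX rmorphD rmorphM rmorph_nat (pcharf0 cK) mul0r addr0.
  by rewrite rmorphXn /= map_mpolyX.
- by move=> a b ha hb; rewrite GmD !rmorphD /= ha hb expDp.
- by move=> a b ha hb; rewrite GmM !rmorphM /= ha hb exprMn.
Qed.


Lemma Gm_expand (k : fieldType) p (p_char : p \in [pchar k]) (W : comNzRingType)
  (pi : {rmorphism W -> k}) (sigma : {rmorphism W -> W})
  (sigma_frob : forall w, pi (sigma w) = pi w ^+ p) n (u : 'I_n -> {mpoly W[n]}) g :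
  exists y, Gm p sigma u g - Ftilde p sigma g = p%:R * y /\
    map_mpoly pi y = \sum_(j < n) ((map_mpoly pi g)^`M(j)) ^+ p * map_mpoly pi (u j).
Proof.
have cK := pchar_mpoly n p_char.
have p0 : (0 < p)%N by apply: prime_gt0; case/andP: p_char.
have e0 : (0 : {mpoly k[n]}) ^+ p = 0 by rewrite expr0n gtn_eqF.
rewrite Ftilde_Gm; elim/mpoly_ring_ind: g.
- move=> c; exists 0; rewrite !GmC subrr mulr0 rmorph0 map_mpolyC; split => //.
  by rewrite big1 // => j _; rewrite mderivC e0 mul0r.
- move=> i; exists (u i); rewrite !GmX mulr0 addr0 addrC addKr; split => //.
  rewrite map_mpolyX (bigD1 i) //= mderivXi eqxx expr1n mul1r big1 ?addr0 //.
  by move=> j /negbTE ji; rewrite mderivXi eq_sym ji e0 mul0r.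
- move=> a b [y1 [h1 m1]] [y2 [h2 m2]]; exists (y1 + y2); split.
    by rewrite !GmD mulrDr -h1 -h2; ring.
  rewrite rmorphD /= m1 m2 -big_split /=; apply: eq_bigr => j _.
  by rewrite rmorphD mderivD expDp // mulrDl.
- move=> a b [y1 [h1 m1]] [y2 [h2 m2]].
  exists (y1 * Gm p sigma u b + Gm p sigma (fun _ => 0) a * y2); split.
    by rewrite !GmM mulrDr !mulrA -h1 (mulrC p%:R) -mulrA -h2; ring.
  rewrite rmorphD !rmorphM /= !map_Gm // m1 m2 mulr_suml mulr_sumr -big_split /=.
  apply: eq_bigr => j _; rewrite mderivM expDp // !exprMn; ring.
Qed.

Lemma in_ideal_ext (T : comNzRingType) m (g g' : 'I_m -> T) x :
  (forall j, g j = g' j) -> in_ideal g x -> in_ideal g' x.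
Proof.
move=> e [c ->]; exists c; by apply: eq_bigr => j _; rewrite e.
Qed.

Lemma mapmB (k : fieldType) (W : comNzRingType) (pi : {rmorphism W -> k}) n (a b : {mpoly W[n]}) :
  map_mpoly pi (a - b) = map_mpoly pi a - map_mpoly pi b.
Proof. exact: rmorphB. Qed.
Lemma mapmD (k : fieldType) (W : comNzRingType) (pi : {rmorphism W -> k}) n (a b : {mpoly W[n]}) :
  map_mpoly pi (a + b) = map_mpoly pi a + map_mpoly pi b.
Proof. exact: rmorphD. Qed.
Lemma mapmM (k : fieldType) (W : comNzRingType) (pi : {rmorphism W -> k}) n (a b : {mpoly W[n]}) :
  map_mpoly pi (a * b) = map_mpoly pi a * map_mpoly pi b.
Proof. exact: rmorphM. Qed.
Lemma mapmX (k : fieldType) (W : comNzRingType) (pi : {rmorphism W -> k}) n (a : {mpoly W[n]}) e :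
  map_mpoly pi (a ^+ e) = map_mpoly pi a ^+ e.
Proof. exact: rmorphXn. Qed.
Lemma mapm_sum (k : fieldType) (W : comNzRingType) (pi : {rmorphism W -> k}) n l (F : 'I_l -> {mpoly W[n]}) :
  map_mpoly pi (\sum_(i < l) F i) = \sum_(i < l) map_mpoly pi (F i).
Proof. exact: rmorph_sum. Qed.
Lemma mapm_nat (k : fieldType) (W : comNzRingType) (pi : {rmorphism W -> k}) n e :
  map_mpoly pi (e%:R : {mpoly W[n]}) = e%:R.
Proof. exact: rmorph_nat. Qed.

Lemma in_ideal_mapm (k : fieldType) (W : comNzRingType) (pi : {rmorphism W -> k}) n m
  (g : 'I_m -> {mpoly W[n]}) x :
  in_ideal g x -> in_ideal (fun j => map_mpoly pi (g j)) (map_mpoly pi x).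
Proof.
move=> [c ->]; exists (fun j => map_mpoly pi (c j)).
by rewrite rmorph_sum; apply: eq_bigr => j _; rewrite rmorphM.
Qed.

Lemma divp_mpoly (k : fieldType) p (W : comNzRingType) (pi : {rmorphism W -> k})
  (W_W2 : is_W2 p pi) n (q : {mpoly W[n]}) :
  map_mpoly pi q = 0 -> exists z, q = p%:R * z.
Proof.
case: W_W2 => _ ker _ hq.
pose v (w : W) := epsilon (inhabits 0) (fun v => w = p%:R * v).
exists (\sum_(m <- msupp q) v (q@_m) *: 'X_[m]).
rewrite -mpolyC_nat mul_mpolyC scaler_sumr {1}(mpolyE q); apply: eq_bigr => m _.
rewrite scalerA; congr (_ *: _); rewrite /v.
apply: (epsilon_spec (inhabits 0) (fun v => q@_m = p%:R * v)); apply/ker.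
by rewrite -mcoeff_map_mpoly hq mcoeff0.
Qed.

Lemma lift_mpoly (k : fieldType) p (W : comNzRingType) (pi : {rmorphism W -> k})
  (W_W2 : is_W2 p pi) n (a : {mpoly k[n]}) : exists b, map_mpoly pi b = a.
Proof.
case: W_W2 => surj _ _; elim/mpoly_ring_ind: a.
- by move=> c; have [w hw] := surj c; exists w%:MP; rewrite map_mpolyC; congr (_ %:MP).
- by move=> i; exists 'X_i; rewrite map_mpolyX.
- by move=> a b [a' <-] [b' <-]; exists (a' + b'); rewrite rmorphD.
- by move=> a b [a' <-] [b' <-]; exists (a' * b'); rewrite rmorphM.
Qed.

Lemma Pmap_spec (k : fieldType) p (p_char : p \in [pchar k]) (W : comNzRingType)
  (pi : {rmorphism W -> k}) (W_W2 : is_W2 p pi) (sigma : {rmorphism W -> W})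
  (sigma_frob : forall w, pi (sigma w) = pi w ^+ p) n (g : {mpoly W[n]}) :
  exists ht, map_mpoly pi ht = Pmap p pi sigma g /\ p%:R * ht = Ftilde p sigma g - g ^+ p.
Proof.
suff H : exists h, isP p pi sigma g h.
  exact: (epsilon_spec (inhabits 0) (isP p pi sigma g) H).
have [z hz] : exists z, Ftilde p sigma g - g ^+ p = p%:R * z.
  apply: (divp_mpoly W_W2).
  by rewrite Ftilde_Gm rmorphB /= map_Gm // rmorphXn subrr.
by exists (map_mpoly pi z), z.
Qed.

Lemma ppW (k : fieldType) p (p_char : p \in [pchar k]) (W : comNzRingType)
  (pi : {rmorphism W -> k}) (W_W2 : is_W2 p pi) : (p%:R * p%:R : W) = 0.
Proof.
case: W_W2 => _ _ kp; apply/kp; by rewrite rmorph_nat (pcharf0 p_char).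
Qed.

Lemma flat_E1 (k : fieldType) p (W : comNzRingType) (pi : {rmorphism W -> k})
  (W_W2 : is_W2 p pi) n m (f : 'I_m -> {mpoly k[n]}) (ft : 'I_m -> {mpoly W[n]})
  (ft_lift : forall i, map_mpoly pi (ft i) = f i) (B_flat : flat_quot ft) w :
  in_ideal ft (p%:R * w) -> in_ideal f (map_mpoly pi w).
Proof.
move=> hw; have hw' : in_ideal ft (\sum_(i < 1) (fun _ => (p%:R : W)) i *: (fun _ => w) i).
  by rewrite big_ord1 scaler_nat -mulr_natl.
have [q [y [b [H1 H2]]]] := B_flat _ _ _ hw'.
have hb : forall j, pi (b ord0 j) = 0.
  move=> j; case: W_W2 => _ _ kp; apply/kp; by have := H2 j; rewrite big_ord1.
have := in_ideal_mapm pi (H1 ord0).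
move/(in_ideal_ext ft_lift); apply: in_ideal_eq.
rewrite mapmB mapm_sum big1 ?subr0 // => j _.
by rewrite map_mpolyZ hb scale0r.
Qed.

Lemma flat_E2 (k : fieldType) p (p_char : p \in [pchar k]) (W : comNzRingType) (pi : {rmorphism W -> k})
  (W_W2 : is_W2 p pi) n m (f : 'I_m -> {mpoly k[n]}) (ft : 'I_m -> {mpoly W[n]})
  (ft_lift : forall i, map_mpoly pi (ft i) = f i) w :
  in_ideal f (map_mpoly pi w) -> in_ideal ft (p%:R * w).
Proof.
move=> [c hc].
have [c' hc'] : exists c' : 'I_m -> {mpoly W[n]}, forall j, map_mpoly pi (c' j) = c j.
  apply: (@fin_all_exists _ (fun _ => {mpoly W[n]}) (fun j cc => map_mpoly pi cc = c j)).
  by move=> j; apply: (lift_mpoly W_W2).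
have [z hz] : exists z, w - \sum_(j < m) c' j * ft j = p%:R * z.
  apply: (divp_mpoly W_W2); rewrite mapmB mapm_sum hc; apply/eqP; rewrite subr_eq0; apply/eqP.
  by apply: eq_bigr => j _; rewrite mapmM hc' ft_lift.
exists (fun j => p%:R * c' j).
have -> : w = p%:R * z + \sum_(j < m) c' j * ft j by rewrite -hz subrK.
rewrite mulrDr mulrA -natrM -mpolyC_nat natrM (ppW p_char W_W2) mpolyC0 mul0r add0r.
by rewrite mulr_sumr; apply: eq_bigr => j _; rewrite mulrA.
Qed.

Unset Implicit Arguments. Set Strict Implicit.

Theorem lemma4p5 (k : fieldType) (p : nat)
  (p_prime : prime p) (p_char : p \in [pchar k])
  (k_perfect : forall a : k, exists b : k, b ^+ p = a)
  (W : comNzRingType) (pi : {rmorphism W -> k}) (W_W2 : is_W2 p pi)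
  (sigma : {rmorphism W -> W}) (sigma_frob : forall w : W, pi (sigma w) = pi w ^+ p)
  (n m : nat) (f : 'I_m -> {mpoly k[n]}) (ft : 'I_m -> {mpoly W[n]})
  (ft_lift : forall i, map_mpoly pi (ft i) = f i)
  (B_flat : flat_quot ft) :
  (exists Phi : {rmorphism {mpoly W[n]} -> {mpoly W[n]}}, frob_lift_endo p sigma ft Phi)
  <->
  (exists h : 'I_n -> {mpoly k[n]}, forall i : 'I_m,
     in_ideal f (Pmap p pi sigma (ft i)
                 - \sum_(j < n) ((f i)^`M(j)) ^+ p * h j)).
Proof.
have p0 : (0 < p)%N by apply: prime_gt0.
have hpow : forall i, in_ideal ft (ft i ^+ p).
  move=> i; rewrite -(prednK p0) exprS; apply: in_idealMr; exact: in_ideal_gen.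
split.
- move=> [Phi [hJ hC hp]].
  have [u hu] : exists u : 'I_n -> {mpoly W[n]},
      forall i, in_ideal ft (Phi 'X_i - 'X_i ^+ p - p%:R * u i).
    apply: (@fin_all_exists _ (fun _ => {mpoly W[n]})
             (fun i uu => in_ideal ft (Phi 'X_i - 'X_i ^+ p - p%:R * uu))).
    by move=> i; apply: hp.
  have step1 : forall g, in_ideal ft (Phi g - Gm p sigma u g).
    elim/mpoly_ring_ind.
    + by move=> c; rewrite GmC; apply: hC.
    + by move=> i; rewrite GmX; apply: in_ideal_eq (hu i); rewrite opprD addrA.
    + move=> a b ha hb; apply: in_ideal_eq (in_idealD ha hb).
      by rewrite rmorphD GmD; ring.
    + move=> a b ha hb.
      apply: in_ideal_eq (in_idealD (in_idealMl (Phi a) hb) (in_idealMr (Gm p sigma u b) ha)).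
      by rewrite rmorphM GmM; ring.
  exists (fun j => - map_mpoly pi (u j)) => i.
  have hG : in_ideal ft (Gm p sigma u (ft i)).
    apply: in_ideal_eq (in_idealB (hJ _ (in_ideal_gen ft i)) (step1 (ft i))).
    by rewrite opprB addrC subrK.
  have [y [hy my]] := Gm_expand p_char sigma_frob u (ft i).
  have [ht [mht hht]] := Pmap_spec p_char W_W2 sigma_frob (ft i).
  have hp2 : in_ideal ft (p%:R * (ht + y)).
    apply: in_ideal_eq (in_idealB hG (hpow i)).
    by rewrite mulrDr hht -hy; ring.
  have := flat_E1 W_W2 ft_lift B_flat hp2; apply: in_ideal_eq.
  rewrite mapmD mht my ft_lift -sumrN; congr (_ + _).
  by apply: eq_bigr => j _; rewrite mulrN opprK.
- move=> [h hh].
  have [u hu] : exists u : 'I_n -> {mpoly W[n]}, forall j, map_mpoly pi (u j) = - h j.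
    apply: (@fin_all_exists _ (fun _ => {mpoly W[n]}) (fun j uu => map_mpoly pi uu = - h j)).
    by move=> j; apply: (lift_mpoly W_W2).
  have hG : forall i, in_ideal ft (Gm p sigma u (ft i)).
    move=> i.
    have [y [hy my]] := Gm_expand p_char sigma_frob u (ft i).
    have [ht [mht hht]] := Pmap_spec p_char W_W2 sigma_frob (ft i).
    have H : in_ideal f (map_mpoly pi (ht + y)).
      apply: in_ideal_eq (hh i).
      rewrite mapmD mht my ft_lift -sumrN; congr (_ + _).
      by apply: eq_bigr => j _; rewrite hu mulrN.
    apply: in_ideal_eq (in_idealD (hpow i) (flat_E2 p_char W_W2 ft_lift H)).
    by rewrite mulrDr hht -hy; ring.
  exists (Gm p sigma u : {rmorphism _ -> _}); split.
  + move=> b [c ->]; change (in_ideal ft (Gm p sigma u (\sum_(j < m) c j * ft j))).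
    rewrite GmSum; apply: in_ideal_sum => j.
    by rewrite GmM; apply: in_idealMl.
  + move=> c; change (in_ideal ft (Gm p sigma u c%:MP - (sigma c)%:MP)).
    by apply: in_ideal_eq (in_ideal0 ft); rewrite GmC subrr.
  + move=> b; change (exists uu, in_ideal ft (Gm p sigma u b - b ^+ p - p%:R * uu)).
    have [y [hy my]] := Gm_expand p_char sigma_frob u b.
    have [ht [mht hht]] := Pmap_spec p_char W_W2 sigma_frob b.
    exists (ht + y); apply: in_ideal_eq (in_ideal0 ft).
    by rewrite mulrDr hht -hy; ring.
Qed.
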